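(* Let $T$ be a normal spanning tree of a connected graph $G$ with $n$ vertices and $m$ edges. For any $\mathbf{0}\ne r=(r_1,\dots,r_{m-n+1})\in\mathbb{I}^{m-n+1}$, let $s=(2\pi-r_1,\dots,2\pi-r_{m-n+1})$ with entries taken modulo $2\pi$ (so $s\in\mathbb{I}^{m-n+1}$). Then $\mathcal{A}_T(r)$ and $\mathcal{A}_T(s)$ are $\mathbb{T}$-cospectral, i.e. all $\mathbb{T}$-gain graphs in $\mathcal{A}_T(r)\cup\mathcal{A}_T(s)$ have adjacency matrices with the same spectrum.
   Context: Graphs are finite, simple and undirected. $\mathbb{T}=\{z\in\mathbb{C}:|z|=1\}$, $\mathbb{I}=[0,2\pi)$, $\mathbf{0}=(0,\dots,0)$. A $\mathbb{T}$-gain on $G$ is a map $\varphi$ from oriented edges to $\mathbb{T}$ with $\varphi(\overrightarrow{e_{ts}})=\varphi(\overrightarrow{e_{st}})^{-1}$; $A(\Phi)$ for $\Phi=(G,\varphi)$ is the Hermitian matrix with $(s,t)$ entry $\varphi(\overrightarrow{e_{st}})$ if $v_s\sim v_t$, else $0$; $\mathcal{T}_G$ is the set of all $\mathbb{T}$-gain graphs on $G$. The gain of a directed cycle is the product of gains of its oriented edges. A rooted spanning tree $T$ with root $v_r$ induces the tree order ($v_x\le v_y$ iff $v_x$ is on the $T$-path from $v_r$ to $v_y$); $T$ is normal if adjacent vertices of $G$ are always comparable. The suitably oriented graph $\overrightarrow{G_T}$ orients each edge $e_{st}$ with $v_s\le v_t$ as $\overrightarrow{e_{st}}$ if $e_{st}\in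 E(T)$ and as $\overrightarrow{e_{ts}}$ otherwise; the $m-n+1$ fundamental cycles of $T$ become directed cycles $\overrightarrow{C_j(T)}$. For $r=(c_1,\dots,c_{m-n+1})\in\mathbb{I}^{m-n+1}$, $\mathcal{A}_T(r)=\{(G,\varphi)\in\mathcal{T}_G:\varphi(\overrightarrow{C_j(T)})=e^{ic_j}\ \forall j\}$. *)

(* Defs.v *)
From mathcomp Require Import all_boot all_order all_algebra.
From mathcomp Require Import complex.
From mathcomp Require Import reals trigo.
Set Implicit Arguments. Unset Strict Implicit. Unset Printing Implicit Defensive.
Import Order.TTheory GRing.Theory Num.Theory.
Local Open Scope ring_scope.
Local Open Scope complex_scope.

Definition simple_graph (n : nat) (G : rel 'I_n) : Prop :=
  symmetric G /\ irreflexive G.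

Definition connected_graph (n : nat) (G : rel 'I_n) : Prop :=
  forall x y, connect G x y.

Definition has_cycle (n : nat) (T : rel 'I_n) : Prop :=
  exists c : seq 'I_n, [/\ 3 <= size c, uniq c & cycle T c]%N.

Definition spanning_tree (n : nat) (G T : rel 'I_n) : Prop :=
  [/\ symmetric T, (forall x y, T x y -> G x y),
      (forall x y, connect T x y) & ~ has_cycle T].

Definition tree_path (n : nat) (T : rel 'I_n) (x y : 'I_n) (p : seq 'I_n) : Prop :=
  [/\ path T x p, last x p = y & uniq (x :: p)].

Definition tree_le (n : nat) (T : rel 'I_n) (rt x y : 'I_n) : Prop :=
  exists p, tree_path T rt y p /\ x \in rt :: p.

Definition normal_tree (n : nat) (G T : rel 'I_n) (rt : 'I_n) : Prop :=
  forall x y, G x y -> tree_le T rt x y \/ tree_le T rt y x.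

(* Non-tree edges e_st of G, written as the ordered pair (s,t) with s <= t in
   the tree order; each determines one fundamental cycle C(s,t). *)
Definition cotree_pair (n : nat) (G T : rel 'I_n) (rt s t : 'I_n) : Prop :=
  [/\ G s t, ~~ T s t & tree_le T rt s t].

(* A T-gain graph on G, given by its values on oriented edges
   (phi x y = gain of the oriented edge from x to y; values on non-edges
   are irrelevant). *)
Definition gain_graph (R : realType) (n : nat) (G : rel 'I_n)
    (phi : 'I_n -> 'I_n -> R[i]) : Prop :=
  forall x y, G x y -> `|phi x y| = 1 /\ phi y x = (phi x y)^-1.

Definition adj_mx (R : realType) (n : nat) (G : rel 'I_n)
    (phi : 'I_n -> 'I_n -> R[i]) : 'M[R[i]]_n :=
  \matrix_(i, j) (if G i j then phi i j else 0).

(* Gain of the directed fundamental cycle of the suitably oriented graph: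
   tree path s = v0 -> v1 -> ... -> vk = t (tree edges oriented away from the
   root), followed by the non-tree edge oriented t -> s. *)
Definition cycle_gain (R : realType) (n : nat) (phi : 'I_n -> 'I_n -> R[i])
    (s t : 'I_n) (p : seq 'I_n) : R[i] :=
  (\prod_(z <- pairmap phi s p) z) * phi t s.

Definition expi (R : realType) (c : R) : R[i] := cos c +i* sin c.

(* Membership in A_T(r); the vector r is indexed by the non-tree edges
   (cotree pairs (s,t)), r s t being the prescribed angle of C(s,t). *)
Definition in_AT (R : realType) (n : nat) (G T : rel 'I_n) (rt : 'I_n)
    (r : 'I_n -> 'I_n -> R) (phi : 'I_n -> 'I_n -> R[i]) : Prop :=
  forall s t p, cotree_pair G T rt s t -> tree_path T s t p ->
    cycle_gain phi s t p = expi (r s t).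

(* s = (2pi - r_j) mod 2pi, for r_j in [0, 2pi). *)
Definition flip_angles (R : realType) (n : nat) (r : 'I_n -> 'I_n -> R) :
    'I_n -> 'I_n -> R :=
  fun s t => if r s t == 0 then 0 else 2 * pi - r s t.

(* Main.v *)
Require Import Defs.
From mathcomp Require Import all_boot all_order all_algebra.
From mathcomp Require Import complex.
From mathcomp Require Import reals trigo.
From mathcomp Require Import ring.
Set Implicit Arguments. Unset Strict Implicit.
Import Order.TTheory GRing.Theory Num.Theory.
Local Open Scope ring_scope.
Section ExpiSec.
Local Open Scope complex_scope.
Lemma expi_mulN (R : realType) (x : R) : expi x * (cos x +i* (- sin x)) = 1.
Proof.
apply/eqP; rewrite eq_complex /=; apply/andP; split; apply/eqP.
  by rewrite mulrN opprK -!expr2 cos2Dsin2.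
by rewrite mulrN mulrC addNr.
Qed.

Lemma expi_flip (R : realType) n (r : 'I_n -> 'I_n -> R) s t :
  expi (r s t) * expi (flip_angles r s t) = 1.
Proof.
rewrite /flip_angles; case: eqP => [->|_].
  by rewrite /expi sin0 cos0 mul1r.
rewrite {2}/expi cosB sinB mulr_natl cos2pi sin2pi !mul1r !mul0r addr0 sub0r.
exact: expi_mulN.
Qed.
End ExpiSec.

Lemma first_split (T : eqType) (A : pred T) s : has A s ->
  exists s1 z s2, [/\ s = s1 ++ z :: s2, A z & ~~ has A s1].
Proof.
elim: s => //= a s IH; case Aa: (A a) => /=.
  by move=> _; exists [::], a, s.
by case/IH => s1 [z [s2 [-> Az Hs1]]]; exists (a :: s1), z, s2; rewrite /= Aa.
Qed.

Lemma mem_split (T : eqType) (z : T) s : z \in s -> exists s1 s2, s = s1 ++ z :: s2.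
Proof.
move=> zs; have : has (pred1 z) s by rewrite has_pred1.
by case/first_split => s1 [z' [s2 [-> /eqP -> _]]]; exists s1, s2.
Qed.

Lemma tree_path_unique n (T : rel 'I_n) : symmetric T -> ~ has_cycle T ->
  forall x y p q, tree_path T x y p -> tree_path T x y q -> p = q.
Proof.
move=> Tsym Tnc x y p; elim: p x => [|a p IH] x q [Pp Lp Up] [Pq Lq Uq].
  case: q Pq Lq Uq => // b q' _ /= Lq; rewrite /= in Lp; rewrite -Lp in Lq.
  move=> /andP [+ _]; rewrite -{1}Lq; by have := mem_last b q' => ->.
case: q Pq Lq Uq => [|b q'] Pq Lq Uq.
  rewrite /= in Lq; rewrite -Lq in Lp; move: Up => /= /andP [+ _].
  by rewrite -{1}Lp; have := mem_last a p => ->.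
have [eab|nab] := eqVneq a b.
  subst b; congr (_ :: _); apply: (IH a).
    split; [by case/andP: Pp | by [] | by case/andP: Up].
  split; [by case/andP: Pq | by [] | by case/andP: Uq].
exfalso; apply: Tnc.
set P := a :: p in Pp Lp Up *; set Q := b :: q' in Pq Lq Uq *.
have yP : y \in P by rewrite -Lp /P /=; exact: mem_last.
have yQ : y \in Q by rewrite -Lq /Q /=; exact: mem_last.
have : has (mem Q) P by apply/hasP; exists y.
case/first_split => p1 [z [p2 [EP zQ Hp1]]].
have zQ' : z \in Q by exact: zQ.
have [q1 [q2 EQ]] := mem_split zQ.
exists (x :: p1 ++ z :: rev q1); split.
- rewrite /= size_cat /= size_rev.
  case: p1 EP {Hp1} => [|? ?]; last by rewrite /= addnS.
  case: q1 EQ => [|? ?]; last by rewrite /= !addnS.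
  rewrite /P /Q /= => -[e1 _] [e2 _]; by move: nab; rewrite e1 e2 eqxx.
- move: Up Uq; rewrite EP EQ /= !mem_cat !inE !cat_uniq /= !negb_or.
  rewrite /= rev_uniq mem_rev.
  case/and5P=> /and3P [xp1 _ _] Up1 _ _ _.
  case/and5P=> /and3P [xq1 xz _] Uq1 /andP [zq1 _] _ _.
  rewrite xp1 xz xq1 Up1 Uq1 /= mem_rev zq1 andbT.
  have nQ : forall v, v \in p1 -> v \notin Q.
    by move=> v vp1; apply: contra Hp1 => vQ; apply/hasP; exists v.
  have zp1 : z \notin p1 by apply/negP => zp1; by move: (nQ z zp1); rewrite zQ'.
  rewrite zp1 /=.
  rewrite andbT; apply/hasPn => v; rewrite mem_rev => vq1 /=; apply/negP => vp1.
  by move: (nQ v vp1); rewrite EQ mem_cat vq1.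
- rewrite /cycle /= rcons_cat cat_path rcons_cons /=.
  move: Pp; rewrite EP cat_path => /andP [-> /= /andP [-> _]] /=.

  move: Pq; rewrite EQ cat_path => /andP [Pq1 /= /andP [Tz _]].
  have : path T x (rcons q1 z) by rewrite -cats1 cat_path Pq1 /= Tz.
  rewrite -rev_path last_rcons belast_rcons rev_cons.
  by apply: sub_path => u v; rewrite Tsym.
Qed.
Lemma char_poly_tr (F : fieldType) n (A : 'M[F]_n) : char_poly A^T = char_poly A.
Proof.
rewrite /char_poly -det_tr; congr (\det _); apply/matrixP => i j.
by rewrite !mxE eq_sym.
Qed.

Lemma char_poly_diag_conj (F : fieldType) n (A : 'M[F]_n) (f : 'I_n -> F) :
  (forall i, f i != 0) ->
  char_poly (\matrix_(i, j) ((f i)^-1 * A i j * f j)) = char_poly A.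
Proof.
move=> nz.
pose D := diag_mx (\row_i (f i)%:P); pose Di := diag_mx (\row_i ((f i)^-1)%:P).
have uv : forall k, ((f k)^-1)%:P * (f k)%:P = 1 :> {poly F}.
  by move=> k; rewrite -polyCM mulVf.
have E : char_poly_mx (\matrix_(i, j) ((f i)^-1 * A i j * f j)) =
         Di *m char_poly_mx A *m D.
  apply/matrixP => i j; rewrite mul_mx_diag mul_diag_mx !mxE.
  rewrite !polyCM; case: eqVneq => [<-|_] /=.
    rewrite mulr1n mulrBr mulrBl; congr (_ - _).
    by rewrite mulrAC uv mul1r.
  by rewrite mulr0n !sub0r mulrN mulNr.
rewrite /char_poly E !det_mulmx !det_diag mulrAC -big_split /=.
rewrite big1 ?mul1r // => i _; rewrite !mxE; exact: uv.
Qed.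

Section Switch.
Variables (R : realType) (n : nat) (G T : rel 'I_n) (rt : 'I_n).

Fixpoint wprod (phi : 'I_n -> 'I_n -> R[i]) x p : R[i] :=
  if p is y :: p' then phi x y * wprod phi y p' else 1.

Lemma prod_pairmap phi x p : \prod_(z <- pairmap phi x p) z = wprod phi x p.
Proof. by elim: p x => [|y p IH] x /=; rewrite ?big_nil // big_cons IH. Qed.

Lemma wprod_cat phi x p1 p2 :
  wprod phi x (p1 ++ p2) = wprod phi x p1 * wprod phi (last x p1) p2.
Proof. by elim: p1 x => [|y p IH] x /=; rewrite ?mul1r // IH mulrA. Qed.

Lemma wprod_neq0 phi x p : (forall u v, T u v -> phi u v != 0) ->
  path T x p -> wprod phi x p != 0.
Proof.
move=> nz; elim: p x => [|y p IH] x /=; first by rewrite oner_neq0.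
by case/andP => Txy Pp; rewrite mulf_neq0 // ?nz // IH.
Qed.

Definition inATg (g : 'I_n -> 'I_n -> R[i]) phi :=
  forall s t p, cotree_pair G T rt s t -> tree_path T s t p ->
    cycle_gain phi s t p = g s t.

Lemma gain_neq0 (phi : 'I_n -> 'I_n -> R[i]) x y : gain_graph G phi -> G x y -> phi x y != 0.
Proof.
move=> gg Gxy; have [n1 _] := gg x y Gxy.
by apply/eqP => e; rewrite e normr0 in n1; move/eqP: n1; rewrite eq_sym oner_eq0.
Qed.

Lemma switch g phi psi :
  simple_graph G -> spanning_tree G T -> normal_tree G T rt ->
  gain_graph G phi -> gain_graph G psi -> inATg g phi -> inATg g psi ->
  char_poly (adj_mx G phi) = char_poly (adj_mx G psi).
Proof.
move=> [Gsym Girr] [Tsym TG Tconn Tnc] NT gphi gpsi Aphi Apsi.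
have uniqT := tree_path_unique Tsym Tnc.
have ex : forall x, exists p, [&& path T rt p, last rt p == x & uniq (rt :: p)].
  move=> x; case/connectP: (Tconn rt x) => p Pp ->.
  case/shortenP: Pp => p' Pp' Up' _; exists p'; by rewrite Pp' eqxx Up'.
pose pth x := xchoose (ex x).
have tp : forall x, tree_path T rt x (pth x).
  move=> x; have /and3P [P1 /eqP L1 U1] := xchooseP (ex x); by split.
have nzT : forall ph : 'I_n -> 'I_n -> R[i], gain_graph G ph -> forall u v, T u v -> ph u v != 0.
  by move=> ph gg u v Tuv; apply: gain_neq0 gg (TG _ _ Tuv).
pose f x := wprod psi rt (pth x) / wprod phi rt (pth x).
have key : forall x y, G x y -> tree_le T rt x y ->
    psi x y * f x = phi x y * f y.
  move=> x y Gxy tle; have [p [[Pp Lp Up] xin]] := tle.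
  have Ey : pth y = p by apply: uniqT (tp y) _.
  case/splitPl: xin Pp Lp Up Ey => p1 p2 Lx Pp Lp Up Ey.
  move: Pp; rewrite cat_path Lx => /andP [Pp1 Pp2].
  move: Lp; rewrite last_cat Lx => Lp2.
  move: Up; rewrite -cat_cons cat_uniq => /and3P [Up1 Hd Up2].
  have Ex : pth x = p1.
    apply: uniqT (tp x) _; split => //.
  have tp2 : tree_path T x y p2.
    split => //=; rewrite Up2 andbT; apply: contra Hd => xp2.
    by apply/hasP; exists x => //; rewrite -Lx mem_last.
  rewrite /f Ey Ex !wprod_cat Lx.
  have n1 := wprod_neq0 (nzT _ gphi) Pp1.
  have n2 := wprod_neq0 (nzT _ gphi) Pp2.
  have sub : psi x y * wprod phi x p2 = phi x y * wprod psi x p2.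
    case Txy: (T x y).
      have -> : p2 = [:: y].
        apply: uniqT tp2 _; split => //=; first by rewrite Txy.
        by rewrite inE andbT; apply/eqP => exy; move: Gxy; rewrite exy Girr.
      by rewrite /= !mulr1 mulrC.
    have cp : cotree_pair G T rt x y.
      by split => //; rewrite Txy.
    have := Aphi _ _ _ cp tp2; rewrite -(Apsi _ _ _ cp tp2) /cycle_gain.
    rewrite !prod_pairmap.
    have [_ ->] := gphi x y Gxy; have [_ ->] := gpsi x y Gxy.
    have nphi := gain_neq0 gphi Gxy; have npsi := gain_neq0 gpsi Gxy.
    move/eqP; rewrite eqr_div // => /eqP e.
    by rewrite mulrC e mulrC.
  by rewrite -[psi x y](mulfK n2) sub invfM; ring.
have fnz : forall x, f x != 0.
  move=> x; have [P _ _] := tp x.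
  have h1 := wprod_neq0 (nzT _ gpsi) P; have h2 := wprod_neq0 (nzT _ gphi) P.
  by rewrite /f mulf_neq0 ?invr_neq0.
have full : forall x y, G x y -> psi x y * f x = phi x y * f y.
  move=> x y Gxy; case: (NT x y Gxy) => [tle|tle]; first exact: key.
  have Gyx : G y x by rewrite Gsym.
  have := key y x Gyx tle.
  have [_ ->] := gphi x y Gxy; have [_ ->] := gpsi x y Gxy.
  have nphi := gain_neq0 gphi Gxy; have npsi := gain_neq0 gpsi Gxy.
  rewrite mulrC [in RHS]mulrC => /eqP; rewrite eqr_div // => /eqP e.
  by rewrite mulrC -e mulrC.
have -> : adj_mx G psi = \matrix_(i, j) ((f i)^-1 * adj_mx G phi i j * f j).
  apply/matrixP => i j; rewrite !mxE; case Gij: (G i j); last by rewrite mulr0 mul0r.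
  by rewrite -mulrA -(full i j Gij) mulrCA mulVf // mulr1.
by rewrite char_poly_diag_conj.
Qed.

Definition trg (phi : 'I_n -> 'I_n -> R[i]) := fun x y => phi y x.

Lemma adj_trg phi : simple_graph G -> adj_mx G (trg phi) = (adj_mx G phi)^T.
Proof. by move=> [Gsym _]; apply/matrixP => i j; rewrite !mxE Gsym. Qed.

Lemma gain_trg phi : simple_graph G -> gain_graph G phi -> gain_graph G (trg phi).
Proof.
move=> [Gsym _] gg x y Gxy; have Gyx : G y x by rewrite Gsym.
have [n1 e1] := gg y x Gyx; split => //; by rewrite /trg e1 invrK.
Qed.

Lemma wprod_trg phi x p : gain_graph G phi -> (forall u v, T u v -> G u v) ->
  path T x p -> wprod (trg phi) x p = (wprod phi x p)^-1.
Proof.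
move=> gg TG; elim: p x => [|y p IH] x /=; first by rewrite invr1.
case/andP => Txy Pp; rewrite IH // invfM /trg; congr (_ * _).
by have [_ ->] := gg x y (TG _ _ Txy).
Qed.

Lemma inAT_trg g phi : simple_graph G -> spanning_tree G T -> gain_graph G phi ->
  inATg g phi -> inATg (fun s t => (g s t)^-1) (trg phi).
Proof.
move=> [Gsym _] [_ TG _ _] gg A s t p cp tp; rewrite -(A s t p cp tp).
have [Gst _ _] := cp; have [Pp _ _] := tp.
rewrite /cycle_gain !prod_pairmap wprod_trg // invfM; congr (_ * _).
have Gts : G t s by rewrite Gsym.
by rewrite /trg; have [_ ->] := gg t s Gts.
Qed.

End Switch.

Unset Implicit Arguments.

Theorem lemma3p3 (R : realType) (n : nat) (G T : rel 'I_n) (rt : 'I_n)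
    (r : 'I_n -> 'I_n -> R) :
  simple_graph G -> connected_graph G ->
  spanning_tree G T -> normal_tree G T rt ->
  (forall s t, cotree_pair G T rt s t -> 0 <= r s t < 2 * pi) ->
  (exists s t, cotree_pair G T rt s t /\ r s t != 0) ->
  forall phi1 phi2 : 'I_n -> 'I_n -> R[i],
    gain_graph G phi1 -> gain_graph G phi2 ->
    (in_AT G T rt r phi1 \/ in_AT G T rt (flip_angles r) phi1) ->
    (in_AT G T rt r phi2 \/ in_AT G T rt (flip_angles r) phi2) ->
    char_poly (adj_mx G phi1) = char_poly (adj_mx G phi2).
Proof.
move=> SG _ ST NT _ _ phi1 phi2 g1 g2 H1 H2.
pose e1 := fun s t => expi (r s t); pose e2 := fun s t => expi (flip_angles r s t).
have E21 : forall s t, (e2 s t)^-1 = e1 s t.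
  move=> s t.
  have h : e1 s t * e2 s t = 1 by exact: expi_flip.
  have nz : e2 s t != 0 by apply/eqP => e; move: h; rewrite e mulr0 => /eqP; rewrite eq_sym oner_eq0.
  by rewrite -[e1 s t](mulfK nz) h mul1r.
have T2 : forall phi : 'I_n -> 'I_n -> R[i], gain_graph G phi -> inATg G T rt e2 phi -> inATg G T rt e1 (trg phi).
  move=> phi gg A s t p cp tp; rewrite -E21.
  exact: (inAT_trg SG ST gg A cp tp).
have ctr : forall phi : 'I_n -> 'I_n -> R[i], char_poly (adj_mx G (trg phi)) = char_poly (adj_mx G phi).
  by move=> phi; rewrite (adj_trg phi SG) char_poly_tr.
case: H1 => A1; case: H2 => A2.
- exact: (switch SG ST NT g1 g2 A1 A2).
- by rewrite -(ctr phi2); apply: (switch SG ST NT g1 (gain_trg SG g2) A1 (T2 _ g2 A2)).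
- by rewrite -(ctr phi1); apply: (switch SG ST NT (gain_trg SG g1) g2 (T2 _ g1 A1) A2).
- exact: (switch SG ST NT g1 g2 A1 A2).
Qed.
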